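(* Uniformly in real $y \geq 1$ and positive integers $k$, \[ \sum_{\substack{d \leq y\\ (d,k) = 1}} \frac{\mu(d)\,t(d)^2}{d} = 1+o(1), \qquad x \to \infty.\]
   Context: $\mu$ is the Möbius function. Let $x$ be large and $\lambda = \sqrt{\log x \log\log x}$. Define the multiplicative function $r$ by $r(p) = \frac{\lambda}{\sqrt{p}\log p}$ for primes $\lambda^2 \le p \le \exp((\log\lambda)^2)$, $r(p)=0$ for other primes, and $r(p^n)=0$ for $n\ge2$. Define the multiplicative function $t$ by $t(p^n) = \frac{r(p^n)}{1+r(p^n)^2}$. *)

(* Defs.v *)
From HB Require Import structures.
From mathcomp Require Import all_boot all_order all_algebra.
From mathcomp Require Import all_classical all_reals all_analysis.
Set Implicit Arguments. Unset Strict Implicit. Unset Printing Implicit Defensive.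
Import Order.TTheory GRing.Theory Num.Theory.
Local Open Scope ring_scope.

Definition squarefree (n : nat) : bool :=
  (0 < n)%N && all (fun p => logn p n == 1)%N (primes n).

Definition moebius {R : ringType} (n : nat) : R :=
  if squarefree n then (-1) ^+ size (primes n) else 0.

(* The multiplicative function (on n >= 1) determined by its values
   f p e on prime powers p^e (e >= 1). *)
Definition multfun {R : ringType} (f : nat -> nat -> R) (n : nat) : R :=
  \prod_(p <- primes n) f p (logn p n).

Section Params.
Variable R : realType.

Definition lam (x : R) : R := Num.sqrt (ln x * ln (ln x)).

Definition r_pp (x : R) (p e : nat) : R :=
  if (e == 1)%N && (lam x ^+ 2 <= p%:R) && (p%:R <= expR ((ln (lam x)) ^+ 2))
  then lam x / (Num.sqrt p%:R * ln p%:R) else 0.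

Definition t_pp (x : R) (p e : nat) : R :=
  r_pp x p e / (1 + r_pp x p e ^+ 2).

Definition r_fun (x : R) (n : nat) : R := multfun (r_pp x) n.
Definition t_fun (x : R) (n : nat) : R := multfun (t_pp x) n.

Definition Ssum (x y : R) (k : nat) : R :=
  \sum_(1 <= d < (Num.truncn y).+1 | coprime d k)
     moebius d * t_fun x d ^+ 2 / d%:R.
End Params.

(* Main.v *)
Require Import Defs.
From HB Require Import structures.
From mathcomp Require Import all_boot all_order all_algebra.
From mathcomp Require Import all_classical all_reals all_analysis.
From mathcomp Require Import ring lra.
Import Order.TTheory GRing.Theory Num.Theory.
Local Open Scope ring_scope.
Set Implicit Arguments. Unset Strict Implicit.

Lemma sqf_prod n : squarefree n -> n = (\prod_(p <- primes n) p)%N.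
Proof.
case/andP => n0 /allP H.
rewrite {1}(prod_prime_decomp n0) prime_decompE big_map /=.
by apply: eq_big_seq => p /H /eqP ->; rewrite expn1.
Qed.

Lemma sqf_inj m n : squarefree m -> squarefree n -> primes m =i primes n -> m = n.
Proof.
move=> sm sn e.
have E : primes m = primes n.
  apply: (irr_sorted_eq ltn_trans) => //; [exact: ltnn|exact: sorted_primes|exact: sorted_primes].
by rewrite (sqf_prod sm) (sqf_prod sn) E.
Qed.

Lemma prod_ord_seq (R : comRingType) N (s : seq nat) (F : nat -> R) :
  uniq s -> all (fun p => p < N.+1)%N s ->
  \prod_(i < N.+1 | (i : nat) \in s) F i = \prod_(p <- s) F p.
Proof.
move=> us /allP H.
rewrite -(big_mkord (fun i => i \in s)) -big_filter; apply: perm_big.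
apply: uniq_perm; first by rewrite filter_uniq ?iota_uniq.
  done.
move=> p; rewrite mem_filter mem_index_iota /=.
by case E: (p \in s) => //=; rewrite (H _ E).
Qed.

Lemma primes_lt N d : (d < N.+1)%N -> forall p, p \in primes d -> (p < N.+1)%N.
Proof.
move=> dN p; rewrite mem_primes => /and3P [_ d0 pd].
exact: leq_ltn_trans (dvdn_leq d0 pd) dN.
Qed.

Lemma comb (R : realFieldType) N (b : nat -> R) : (forall n, 0 <= b n) ->
  \sum_(1 <= d < N.+1 | squarefree d) \prod_(p <- primes d) b p
    <= \prod_(i < N.+1) (1 + b i).
Proof.
move=> b0.
have E : \prod_(i < N.+1) (1 + b i) = \sum_(f : {ffun 'I_N.+1 -> bool})
    \prod_(i < N.+1) (if f i then b i else 1).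
  rewrite (eq_bigr (fun i : 'I_N.+1 => \sum_(j : bool) (if j then b i else 1))); last first.
    by move=> i _; rewrite big_bool /= addrC.
  exact: bigA_distr_bigA.
pose pf d := [ffun i : 'I_N.+1 => (i : nat) \in primes d].
rewrite (partition_big pf xpredT) // E; apply: ler_sum => f _.
have G0 : 0 <= \prod_(i < N.+1) (if f i then b i else 1).
  by apply: prodr_ge0 => i _; case: (f i).
have key : forall d, (1 <= d < N.+1)%N -> pf d = f ->
    \prod_(p <- primes d) b p = \prod_(i < N.+1) (if f i then b i else 1).
  move=> d /andP [_ dN] <-.
  rewrite -big_mkcond /= -(@prod_ord_seq _ N _ b (primes_uniq d)); last first.
    by apply/allP; exact: primes_lt dN.
  by apply: eq_bigl => i; rewrite ffunE.
have inj : forall d e, (1 <= d < N.+1)%N -> (1 <= e < N.+1)%N ->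
    squarefree d -> squarefree e -> pf d = pf e -> d = e.
  move=> d e /andP [_ dN] /andP [_ eN] sd se he; apply: sqf_inj => // p.
  case: (ltnP p N.+1) => pN.
    by have := congr1 (fun g : {ffun 'I_N.+1 -> bool} => g (Ordinal pN)) he; rewrite !ffunE.
  case Hd: (p \in primes d); first by have := primes_lt dN Hd; rewrite ltnNge pN.
  case He: (p \in primes e) => //.
  by have := primes_lt eN He; rewrite ltnNge pN.
rewrite -big_filter.
set s := [seq _ <- _ | _].
have us : uniq s by rewrite filter_uniq // iota_uniq.
have ms : forall d, d \in s -> [/\ (1 <= d < N.+1)%N, squarefree d & pf d = f].
  move=> d; rewrite mem_filter mem_index_iota => /andP [/andP [sd /eqP pd] dr].
  by [].
case Es : s us ms => [|d0 [|d1 s']] us ms.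
- by rewrite big_nil.
- rewrite big_seq1.
  have [h1 _ h3] := ms d0 (mem_head _ _).
  by rewrite (key _ h1 h3).
- exfalso.
  have [a1 a2 a3] := ms d0 (mem_head _ _).
  have [b1 b2 b3] := ms d1 ltac:(by rewrite inE mem_head orbT).
  have := inj _ _ a1 b1 a2 b2 (etrans a3 (esym b3)).
  by move=> e; move: us; rewrite /= inE e eqxx.
Qed.

Lemma weier (R : realFieldType) (I : Type) (r : seq I) (b : I -> R) :
  (forall i, 0 <= b i) ->
  \prod_(i <- r) (1 + b i) * (1 - \sum_(i <- r) b i) <= 1.
Proof.
move=> b0; elim: r => [|i r IH]; first by rewrite !big_nil subr0 mulr1.
rewrite !big_cons.
have hP : 0 <= \prod_(j <- r) (1 + b j).
  by apply: prodr_ge0 => j _; rewrite addr_ge0 ?b0.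
have hS : 0 <= \sum_(j <- r) b j by apply: sumr_ge0 => j _.
move: IH hP hS; set P := \prod_(j <- r) _; set S := \sum_(j <- r) _ => IH hP hS.
have ha := b0 i.
have h1 : 0 <= b i * P * S by rewrite !mulr_ge0.
have h2 : 0 <= b i * b i * P by rewrite !mulr_ge0.
nra.
Qed.

Lemma weier2 (R : realFieldType) (I : Type) (r : seq I) (b : I -> R) :
  (forall i, 0 <= b i) -> \sum_(i <- r) b i <= 2^-1 ->
  \prod_(i <- r) (1 + b i) <= 1 + 2 * \sum_(i <- r) b i.
Proof.
move=> b0 hs; have := weier r b0.
have hP : 0 <= \prod_(j <- r) (1 + b j).
  by apply: prodr_ge0 => j _; rewrite addr_ge0 ?b0.
have hS : 0 <= \sum_(j <- r) b j by apply: sumr_ge0 => j _.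
move: hP hS hs; set P := \prod_(j <- r) _; set S := \sum_(j <- r) _ => hP hS hs h.
have h1 : P <= 2 by nra.
nra.
Qed.

Lemma tail (R : realFieldType) (a : R) K : 2 <= a ->
  \sum_(n < K) (if a <= n%:R then (n%:R ^+ 2)^-1 else 0)
    <= (a - 1)^-1 - (Num.max a K%:R - 1)^-1.
Proof.
move=> a2; elim: K => [|K IH].
  rewrite big_ord0 max_l ?subrr //; lra.
rewrite big_ord_recr /=.
case: (lerP a K%:R) => aK.
- rewrite max_r // in IH.
  rewrite max_r; last by rewrite -natr1; lra.
  have K2 : 2 <= (K%:R : R) by lra.
  have : (K%:R ^+ 2 : R)^-1 <= (K%:R - 1)^-1 - (K.+1%:R - 1)^-1.
    rewrite -natr1 addrK.
    have -> : (K%:R - 1 : R)^-1 - K%:R^-1 = (K%:R * (K%:R - 1))^-1.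
      by field; apply/andP; split; apply/negP => /eqP; lra.
    rewrite lef_pV2 ?posrE; [nra| nra| nra].
  move=> h; have := lerD IH h; by rewrite addrA subrK.
- rewrite max_l in IH; last by lra.
  rewrite subrr in IH; rewrite addr0.
  apply: le_trans IH _.
  have hm : a <= Num.max a K.+1%:R by rewrite le_max lexx.
  rewrite subr_ge0 lef_pV2 ?posrE ?lerD2r //; lra.
Qed.

Definition bb (R : realType) (x : R) (n : nat) : R := t_pp x n 1 ^+ 2 / n%:R.

Lemma bb_ge0 (R : realType) (x : R) n : 0 <= bb x n.
Proof. by rewrite /bb divr_ge0 ?sqr_ge0 ?ler0n. Qed.

Lemma term_eq (R : realType) (x : R) d :
  `|moebius d * t_fun x d ^+ 2 / d%:R| =
    if squarefree d then \prod_(p <- primes d) bb x p else 0.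
Proof.
rewrite /moebius; case sd: (squarefree d); last by rewrite !mul0r normr0.
rewrite -mulrA normrM normrX normrN1 expr1n mul1r ger0_norm; last first.
  by rewrite divr_ge0 ?sqr_ge0 ?ler0n.
have -> : (d%:R : R) = \prod_(p <- primes d) p%:R.
  by rewrite {1}(sqf_prod sd) natr_prod.
rewrite /t_fun /multfun -prodrXl -prodf_div.
apply: eq_big_seq => p pd.
move: sd => /andP [_ /allP /(_ p pd) /eqP ->].
by [].
Qed.

Lemma Ssum_bound (R : realType) (x y : R) (k : nat) : 1 <= y ->
  `|Ssum x y k - 1| <= \prod_(i < (Num.truncn y).+1) (1 + bb x i) - 1.
Proof.
move=> y1; rewrite /Ssum.
set N := Num.truncn y.
have N1 : (1 < N.+1)%N by rewrite ltnS truncn_gt0.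
rewrite big_ltn_cond // coprime1n.
have -> : moebius 1 * t_fun x 1 ^+ 2 / (1%:R : R) = 1.
  by rewrite /moebius /t_fun /multfun /= (_ : primes 1 = [::]) // big_nil expr0 expr1n mul1r divr1.
rewrite addrAC subrr add0r.
have := comb N (bb_ge0 x).
move=> h; rewrite big_ltn_cond // in h.
rewrite (_ : squarefree 1 = true) // (_ : primes 1 = [::]) // big_nil in h.
 rewrite lerBrDr addrC; apply: le_trans h; rewrite lerD2l.
apply: le_trans (ler_norm_sum _ _ _) _.
rewrite big_mkcond [X in _ <= X]big_mkcond /=; apply: ler_sum => d _.
rewrite term_eq; case: (coprime d k); first by [].
case: (squarefree d) => //; apply: prodr_ge0 => p _; exact: bb_ge0.
Qed.

Lemma bb_bound (R : realType) (x : R) n : 2 <= lam x ^+ 2 -> 1 <= ln (lam x ^+ 2) ->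
  bb x n <= lam x ^+ 2 / (ln (lam x ^+ 2)) ^+ 2 *
     (if lam x ^+ 2 <= n%:R then (n%:R ^+ 2)^-1 else 0).
Proof.
move=> A2 L1; rewrite /bb /t_pp /r_pp eqxx /=.
have L0 : 0 <= ln (lam x ^+ 2) by lra.
case: ifP => [/andP [An _] | _]; last first.
  rewrite mul0r expr0n /= mul0r; apply: mulr_ge0.
    by rewrite divr_ge0 ?sqr_ge0.
  by case: ifP => _ //; rewrite invr_ge0 sqr_ge0.
rewrite An.
set A := lam x ^+ 2 in A2 L1 L0 An *.
set L := ln A in L1 L0 *.
set nn := (n%:R : R) in An *.
have n0 : 0 < nn by lra.
have lnL : L <= ln nn by rewrite /L ler_ln ?posrE; lra.
have ln0 : 0 < ln nn by lra.
set r := lam x / (Num.sqrt nn * ln nn).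
have r0 : 0 <= r.
  by rewrite /r divr_ge0 ?sqrtr_ge0 // mulr_ge0 ?sqrtr_ge0 //; lra.
have t1 : r / (1 + r ^+ 2) <= r by rewrite ler_pdivrMr; nra.
have t0 : 0 <= r / (1 + r ^+ 2) by rewrite divr_ge0 //; nra.
have t2 : (r / (1 + r ^+ 2)) ^+ 2 <= r ^+ 2 by nra.
have r2 : r ^+ 2 = A / (nn * ln nn ^+ 2).
  by rewrite /r expr_div_n exprMn (sqr_sqrtr (ltW n0)).
apply: le_trans (ler_wpM2r _ t2) _; first by rewrite invr_ge0; lra.
rewrite r2.
have -> : A / (nn * ln nn ^+ 2) / nn = (A / L ^+ 2 * (nn ^+ 2)^-1) * (L ^+ 2 / ln nn ^+ 2).
  by field; apply/and3P; split; apply/negP => /eqP; lra.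
rewrite -[X in _ <= X]mulr1; apply: ler_wpM2l.
  by rewrite mulr_ge0 ?invr_ge0 ?divr_ge0 ?sqr_ge0 //; lra.
by rewrite ler_pdivrMr ?mul1r; nra.
Qed.

Lemma sum_bb (R : realType) (x : R) N : 2 <= lam x ^+ 2 -> 1 <= ln (lam x ^+ 2) ->
  \sum_(i < N) bb x i <= 2 / (ln (lam x ^+ 2)) ^+ 2.
Proof.
move=> A2 L1.
apply: le_trans (ler_sum _ (fun (i : 'I_N) _ => bb_bound (nat_of_ord i) A2 L1)) _.
rewrite -mulr_sumr.
set A := lam x ^+ 2 in A2 L1 *.
set L := ln A in L1 *.
have := tail N A2.
have hm : A <= Num.max A N%:R by rewrite le_max lexx.
have hi : 0 <= (Num.max A N%:R - 1)^-1 by rewrite invr_ge0; lra.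
move=> h.
have h2 : \sum_(i < N) (if A <= i%:R then (i%:R ^+ 2)^-1 else 0) <= (A - 1)^-1 by lra.
have hL : 0 <= A / L ^+ 2 by rewrite divr_ge0 ?sqr_ge0; lra.
apply: le_trans (ler_wpM2l hL h2) _.
have hA : A * (A - 1)^-1 <= 2 by rewrite ler_pdivrMr; lra.
rewrite mulrAC; apply: ler_wpM2r => //.
by rewrite invr_ge0 sqr_ge0.
Qed.

Unset Implicit Arguments.
Theorem mainTheorem13 (R : realType) (eps : R) (heps : 0 < eps) :
  exists X : R, forall x : R, X <= x ->
    forall (y : R) (k : nat), 1 <= y -> (0 < k)%N ->
      `| Ssum x y k - 1 | <= eps.
Proof.
pose M : R := 2 + 4 / eps.
have hM : eps * M = 2 * eps + 4.
  by rewrite /M; field; rewrite lt0r_neq0.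
have M2 : 2 <= M.
  have : 0 <= 4 / eps by rewrite divr_ge0 // ltW.
  rewrite /M; lra.
exists (expR (expR M)) => x hx y k y1 _.
have x0 : 0 < x by apply: lt_le_trans (expR_gt0 _) hx.
have lx : expR M <= ln x by rewrite -(expRK (expR M)) ler_ln ?posrE ?expR_gt0.
have eM : 3 <= expR M by have := expR_ge1Dx M; lra.
have lx0 : 0 < ln x by lra.
have llx : M <= ln (ln x) by rewrite -(expRK M) ler_ln ?posrE ?expR_gt0.
have A : lam x ^+ 2 = ln x * ln (ln x).
  by rewrite /lam sqr_sqrtr // mulr_ge0 //; lra.
have A1 : expR M <= lam x ^+ 2 by rewrite A; nra.
have A2 : 2 <= lam x ^+ 2 by lra.
have LM : M <= ln (lam x ^+ 2).
  by rewrite -(expRK M) ler_ln ?posrE ?expR_gt0 //; lra.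
have L1 : 1 <= ln (lam x ^+ 2) by lra.
set N := Num.truncn y.
have S := sum_bb N.+1 A2 L1.
have B := Ssum_bound x k y1.
move: S B LM L1; set L := ln (lam x ^+ 2) => S B LM L1.
have hL : 0 < L ^+ 2 by rewrite exprn_gt0 //; lra.
have hs : \sum_(i < N.+1) bb x i <= 2^-1.
  apply: le_trans S _; rewrite ler_pdivrMr // ; nra.
have W := @weier2 R _ _ (fun i : 'I_N.+1 => bb x i) (fun i => bb_ge0 x i) hs.
have fin : 2 * (2 / L ^+ 2) <= eps.
  rewrite mulrA ler_pdivrMr //.
  have h1 : eps * M <= eps * L by rewrite ler_wpM2l //; lra.
  nra.
apply: le_trans B _.
have : \prod_(i < N.+1) (1 + bb x i) - 1 <= 2 * \sum_(i < N.+1) bb x i by lra.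
move=> h; apply: le_trans h _.
have : 2 * \sum_(i < N.+1) bb x i <= 2 * (2 / L ^+ 2) by rewrite ler_wpM2l.
lra.
Qed.
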